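(* Assume the standing assumptions (A1)–(A4) and let $\rho>0$. For every $\epsilon\ge 0$ and every $p\in\mathbb R^{n_p}$, $$|f(p)-f(p^* )|\le \epsilon\ \Longrightarrow\ |f_0(p)-f_0(p^* )|\le D_0\Bigl[\frac{2\epsilon}{\mu_0}\Bigr]^{1/2}+\frac{L_0}{2}\Bigl[\frac{2\epsilon}{\mu_0}\Bigr].$$
   Context: Let $n_p,n_c\ge 1$, let $f_0:\mathbb R^{n_p}\to\mathbb R$ and $c_i:\mathbb R^{n_p}\to\mathbb R$ ($i=1,\dots,n_c$) be continuously differentiable, and let $\{1,\dots,n_c\}=I_s\cup I_h$ be a partition into disjoint sets of soft and hard constraint indices. The original problem is $\min_{p\in\mathbb R^{n_p}} f_0(p)$ subject to $c_i(p)\le 0$ for all $i$; $f^{opt}$ denotes its optimal value and $p^{opt}$ an optimal solution (assumed to exist). For a fixed $\varepsilon_\psi>0$ let $\psi(p):=\sum_{i\in I_s}[\max\{0,c_i(p)\}]^2+\sum_{i\in I_h}[\max\{0,c_i(p)+\varepsilon_\psi\}]^2$, and for a penalty parameter $\rho>0$ let $f(p):=f_0(p)+\rho\,\psi(p)$. A differentiable function $\ell$ belongs to $\mathcal F^1_L$ if $\ell(p_2)\le \ell(p_1)+\langle \ell'(p_1),p_2-p_1\rangle+\frac L2\|p_2-p_1\|^2$ for all $p_1,p_2$, and is $\mu$-strongly convex if $\ell(p_2)\ge \ell(p_1)+\langle \ell'(p_1),p_2-p_1\rangle+\frac \mu2\|p_2-p_1\|^2$ for all $p_1,p_2$. Standing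 assumptions: (A1) $f_0(p)\ge 0$ for all $p$; (A2) $f_0\in\mathcal F^1_{L_0}$ and $\psi\in\mathcal F^1_{L_\psi}$ for some reals $L_0,L_\psi\ge 0$; (A3) $f_0$ is $\mu_0$-strongly convex for some $\mu_0>0$, and $\psi$ is convex; (A4) the set $\mathcal A:=\{p:\psi(p)=0\}$ is nonempty and there is $\beta>0$ with $\psi(p)\ge \beta\,[d(p,\mathcal A)]^2$ for all $p$, where $d(p,\mathcal A):=\min_{z\in\mathcal A}\|z-p\|$. Notation: $\|\cdot\|$ is the Euclidean norm; $p^*$ is the unique minimizer of $f$ over $\mathbb R^{n_p}$; $p_u$ is the unique unconstrained minimizer of $f_0$; $p_a$ is a fixed point with $\psi(p_a)=0$; $D_0:=\sup\{\|f_0'(p)\|:\ f_0(p)\le f_0(p_a)\}$; $d(p):=\|p-p^*\|$. *)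

(* Defs.v *)
From mathcomp Require Import ssreflect ssrfun ssrbool eqtype ssrnat seq fintype bigop.
From Stdlib Require Import Reals.
Open Scope R_scope.

Definition Vec (n : nat) := 'I_n -> R.

Definition vadd {n} (x y : Vec n) : Vec n := fun i => x i + y i.
Definition vsub {n} (x y : Vec n) : Vec n := fun i => x i - y i.
Definition vscale {n} (a : R) (x : Vec n) : Vec n := fun i => a * x i.

Definition inner {n} (x y : Vec n) : R := \big[Rplus/0]_(i < n) (x i * y i).
Definition norm {n} (x : Vec n) : R := sqrt (inner x x).

Definition has_grad {n} (l : Vec n -> R) (p g : Vec n) : Prop :=
  forall eps, 0 < eps -> exists delta, 0 < delta /\
    forall h : Vec n, norm h < delta ->
      Rabs (l (vadd p h) - l p - inner g h) <= eps * norm h.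

Definition C1_with {n} (l : Vec n -> R) (l' : Vec n -> Vec n) : Prop :=
  (forall p, has_grad l p (l' p)) /\
  (forall p eps, 0 < eps -> exists delta, 0 < delta /\
     forall q, norm (vsub q p) < delta -> norm (vsub (l' q) (l' p)) < eps).

Definition FL_with {n} (L : R) (l : Vec n -> R) (l' : Vec n -> Vec n) : Prop :=
  (forall p, has_grad l p (l' p)) /\
  forall p1 p2, l p2 <= l p1 + inner (l' p1) (vsub p2 p1)
                        + L / 2 * (norm (vsub p2 p1)) ^ 2.

Definition FL {n} (L : R) (l : Vec n -> R) : Prop :=
  exists l' : Vec n -> Vec n, FL_with L l l'.

Definition strongly_convex_with {n} (mu : R) (l : Vec n -> R) (l' : Vec n -> Vec n) : Prop :=
  (forall p, has_grad l p (l' p)) /\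
  forall p1 p2, l p2 >= l p1 + inner (l' p1) (vsub p2 p1)
                        + mu / 2 * (norm (vsub p2 p1)) ^ 2.

Definition convex {n} (l : Vec n -> R) : Prop :=
  forall (x y : Vec n) (t : R), 0 <= t <= 1 ->
    l (vadd (vscale t x) (vscale (1 - t) y)) <= t * l x + (1 - t) * l y.

Definition psi {np nc} (c : 'I_nc -> Vec np -> R) (soft : pred 'I_nc)
  (eps_psi : R) (p : Vec np) : R :=
  \big[Rplus/0]_(i < nc | soft i) (Rmax 0 (c i p)) ^ 2
  + \big[Rplus/0]_(i < nc | ~~ soft i) (Rmax 0 (c i p + eps_psi)) ^ 2.

Definition fpen {np nc} (f0 : Vec np -> R) (rho : R) (c : 'I_nc -> Vec np -> R)
  (soft : pred 'I_nc) (eps_psi : R) (p : Vec np) : R :=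
  f0 p + rho * psi c soft eps_psi p.

(* Main.v *)
Require Import Defs.
From mathcomp Require Import ssreflect ssrfun ssrbool eqtype ssrnat seq fintype bigop.
From Stdlib Require Import Reals Lra Psatz.
Open Scope R_scope.

Lemma sum3s {I : Type} (s : seq I) (F G K H : I -> R) (a b c : R) :
  (forall i, H i = a * F i + b * G i + c * K i) ->
  \big[Rplus/0]_(i <- s) H i = a * \big[Rplus/0]_(i <- s) F i
     + b * \big[Rplus/0]_(i <- s) G i + c * \big[Rplus/0]_(i <- s) K i.
Proof.
move=> Hi; elim: s => [|x s IH]; first by rewrite !big_nil; ring.
rewrite !big_cons IH Hi; ring.
Qed.

Lemma sum3 (n : nat) (F G K H : 'I_n -> R) (a b c : R) :
  (forall i, H i = a * F i + b * G i + c * K i) ->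
  \big[Rplus/0]_(i < n) H i = a * \big[Rplus/0]_(i < n) F i
     + b * \big[Rplus/0]_(i < n) G i + c * \big[Rplus/0]_(i < n) K i.
Proof. exact: sum3s. Qed.

Lemma sum0 (n : nat) : \big[Rplus/0]_(i < n) (0:R) = 0.
Proof.
rewrite (@sum3 n (fun _ => 0) (fun _ => 0) (fun _ => 0) (fun _ => 0) 0 0 0); first ring.
move=> _; ring.
Qed.

Lemma sum_le (n : nat) (F G : 'I_n -> R) :
  (forall i, F i <= G i) ->
  \big[Rplus/0]_(i < n) F i <= \big[Rplus/0]_(i < n) G i.
Proof.
move=> H; apply: (big_ind2 (fun x y => x <= y)) => //; [lra| move=> *; lra].
Qed.

Lemma sum_ge0 (n : nat) (F : 'I_n -> R) :
  (forall i, 0 <= F i) -> 0 <= \big[Rplus/0]_(i < n) F i.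
Proof. move=> H; have := @sum_le n (fun _ => 0) F H; rewrite sum0; done. Qed.

Lemma inner_ge0 {n} (x : Vec n) : 0 <= inner x x.
Proof.
rewrite /inner; apply: sum_ge0 => i; nra.
Qed.

Lemma norm_sq {n} (x : Vec n) : norm x ^ 2 = inner x x.
Proof. rewrite /norm pow2_sqrt //; exact: inner_ge0. Qed.

Lemma inner_scale_r {n} (g u w : Vec n) a :
  (forall i, u i = a * w i) -> inner g u = a * inner g w.
Proof.
move=> Hu; rewrite /inner (sum3 _ (fun i => g i * w i) (fun i => g i * w i)
   (fun i => g i * w i) _ a 0 0); first ring.
move=> i; rewrite Hu; ring.
Qed.

Lemma inner_scale2 {n} (u w : Vec n) a :
  (forall i, u i = a * w i) -> inner u u = a ^ 2 * inner w w.
Proof.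
move=> Hu; rewrite /inner (sum3 _ (fun i => w i * w i) (fun i => w i * w i)
   (fun i => w i * w i) _ (a^2) 0 0); first ring.
move=> i; rewrite Hu; ring.
Qed.

Lemma cs_sq {n} (g w : Vec n) : (inner g w) ^ 2 <= inner g g * inner w w.
Proof.
set X := inner g w; set A := inner g g; set B := inner w w.
have key : forall t, 0 <= t^2 * A + 2 * t * X + B.
  move=> t.
  have -> : t^2 * A + 2 * t * X + B =
     \big[Rplus/0]_(i < n) ((t * g i + w i) * (t * g i + w i)).
    rewrite (sum3 _ (fun i => g i * g i) (fun i => g i * w i) (fun i => w i * w i)
      _ (t^2) (2*t) 1); first (rewrite /A /X /B /inner; ring).
    move=> i; ring.
  apply: sum_ge0 => i; exact: Rle_0_sqr.
have HA : 0 <= A by exact: inner_ge0.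
have HB : 0 <= B by exact: inner_ge0.
destruct (Req_dec A 0) as [A0|Apos].
  destruct (Req_dec X 0) as [X0|Xn].
    rewrite X0 A0; nra.
  have := key (- (B + 1) / (2 * X)).
  rewrite A0.
  have -> : 2 * (- (B + 1) / (2 * X)) * X = - (B + 1) by field.
  lra.
have Ap : 0 < A by lra.
have := key (- X / A).
have -> : (- X / A) ^ 2 * A + 2 * (- X / A) * X + B = B - X^2 / A by field; lra.
move=> H.
have : X ^ 2 / A <= B by lra.
move=> H2.
have -> : X ^ 2 = (X^2 / A) * A by field; lra.
nra.
Qed.

Lemma cs {n} (g w : Vec n) : Rabs (inner g w) <= norm g * norm w.
Proof.
rewrite /norm -sqrt_mult_alt; last exact: inner_ge0.
rewrite -sqrt_Rsqr_abs; apply: sqrt_le_1_alt.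
rewrite /Rsqr; have := cs_sq g w; lra.
Qed.
Theorem lemma4
  (np nc : nat) (Hnp : (1 <= np)%nat) (Hnc : (1 <= nc)%nat)
  (f0 : Vec np -> R) (f0' : Vec np -> Vec np)
  (c : 'I_nc -> Vec np -> R) (c' : 'I_nc -> Vec np -> Vec np)
  (soft : pred 'I_nc) (eps_psi rho L0 Lpsi mu0 beta D0 : R)
  (pa pstar : Vec np)
  (* smoothness of the data *)
  (Hf0C1 : C1_with f0 f0')
  (HcC1 : forall i, C1_with (c i) (c' i))
  (Heps_psi : 0 < eps_psi)
  (* the original constrained problem has an optimal solution *)
  (Hopt : exists popt : Vec np, (forall i, c i popt <= 0) /\
            forall q : Vec np, (forall i, c i q <= 0) -> f0 popt <= f0 q)
  (* (A1) *)
  (HA1 : forall p, 0 <= f0 p)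
  (* (A2) *)
  (HL0 : 0 <= L0) (HLpsi : 0 <= Lpsi)
  (HA2f0 : FL_with L0 f0 f0')
  (HA2psi : FL Lpsi (psi c soft eps_psi))
  (* (A3) *)
  (Hmu0 : 0 < mu0)
  (HA3f0 : strongly_convex_with mu0 f0 f0')
  (HA3psi : convex (psi c soft eps_psi))
  (* (A4): A = {psi = 0} nonempty, d(p,A) attained, psi p >= beta d(p,A)^2 *)
  (Hbeta : 0 < beta)
  (HA4 : forall p : Vec np, exists z : Vec np,
      psi c soft eps_psi z = 0 /\
      (forall z', psi c soft eps_psi z' = 0 -> norm (vsub z p) <= norm (vsub z' p)) /\
      psi c soft eps_psi p >= beta * (norm (vsub z p)) ^ 2)
  (* p_a with psi(p_a) = 0 and D0 = sup { ||f0'(p)|| : f0 p <= f0 pa } *)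
  (Hpa : psi c soft eps_psi pa = 0)
  (HD0 : is_lub (fun r => exists p, f0 p <= f0 pa /\ r = norm (f0' p)) D0)
  (* penalty parameter and the minimizer p* of f *)
  (Hrho : 0 < rho)
  (Hpstar : forall q, fpen f0 rho c soft eps_psi pstar <= fpen f0 rho c soft eps_psi q) :
  forall (eps : R) (p : Vec np), 0 <= eps ->
    Rabs (fpen f0 rho c soft eps_psi p - fpen f0 rho c soft eps_psi pstar) <= eps ->
    Rabs (f0 p - f0 pstar) <= D0 * sqrt (2 * eps / mu0) + L0 / 2 * (2 * eps / mu0).
Proof.
move=> eps p Heps Habs.
case: HA3f0 => _ Hsc. case: HA2f0 => _ Hsm. case: HD0 => Hub _.
set w : Vec np := vsub p pstar.
set D := inner w w.
have HD : 0 <= D by exact: inner_ge0.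
have Hfp : fpen f0 rho c soft eps_psi p - fpen f0 rho c soft eps_psi pstar <= eps.
  apply: Rle_trans Habs; exact: Rle_abs.
move: Hfp; rewrite /fpen => Hfp.
have stepA : forall t, 0 < t < 1 -> mu0 / 2 * (1 - t) * D <= eps.
  move=> t Ht.
  set m : Vec np := vadd (vscale t p) (vscale (1 - t) pstar).
  have h1 := Hsc m p.
  have h2 := Hsc m pstar.
  have h3 := HA3psi p pstar t (conj (Rlt_le _ _ (proj1 Ht)) (Rlt_le _ _ (proj2 Ht))).
  have h4 := Hpstar m.
  rewrite /fpen in h4.
  have e1 : forall i, vsub p m i = (1 - t) * w i.
    by move=> i; rewrite /vsub /m /vadd /vscale /w /vsub; ring.
  have e2 : forall i, vsub pstar m i = (- t) * w i.
    by move=> i; rewrite /vsub /m /vadd /vscale /w /vsub; ring.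
  rewrite norm_sq (inner_scale_r _ _ _ _ e1) (inner_scale2 _ _ _ e1) in h1.
  rewrite norm_sq (inner_scale_r _ _ _ _ e2) (inner_scale2 _ _ _ e2) in h2.
  fold m in h3. rewrite -/D in h1 h2.
  set G := inner (f0' m) w in h1 h2.
  have key : t * (mu0 / 2 * (1 - t) * D) <= t * eps.
    have : t * (f0 m + (1 - t) * G + mu0 / 2 * ((1 - t) ^ 2 * D)) + (1 - t) * (f0 m + - t * G + mu0 / 2 * ((- t) ^ 2 * D))
           <= t * f0 p + (1 - t) * f0 pstar.
      have := Rmult_le_compat_l t _ _ (Rlt_le _ _ (proj1 Ht)) (Rge_le _ _ h1).
      have : 0 <= 1 - t by lra.
      move=> Ht1.
      have := Rmult_le_compat_l (1 - t) _ _ Ht1 (Rge_le _ _ h2).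
      move=> ? ?; lra.
    have := Rmult_le_compat_l rho _ _ (Rlt_le _ _ Hrho) h3.
    have := Rmult_le_compat_l t _ _ (Rlt_le _ _ (proj1 Ht)) Hfp.
    move=> *. clearbody m G w D. nra.
  apply: (Rmult_le_reg_l t) => //; lra.
have stepB : mu0 / 2 * D <= eps.
  destruct (Rle_lt_dec (mu0 / 2 * D) eps) as [h|h] => //.
  exfalso.
  have Dp : 0 < D by clearbody w D; nra.
  set t := (mu0 / 2 * D - eps) / (mu0 * D).
  have Ht : 0 < t < 1.
    split; rewrite /t.
      apply: Rdiv_lt_0_compat; clearbody t w D; nra.
    apply (Rmult_lt_reg_r (mu0 * D)); first (clearbody t w D; nra).
    replace ((mu0 / 2 * D - eps) / (mu0 * D) * (mu0 * D)) with (mu0 / 2 * D - eps)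
      by (field; split; lra).
    clearbody t w D; nra.
  have := stepA t Ht.
  have -> : mu0 / 2 * (1 - t) * D = mu0 / 2 * D - (mu0 / 2 * D - eps) / 2.
    rewrite /t; field; lra.
  lra.
have HD2 : D <= 2 * eps / mu0.
  apply (Rmult_le_reg_r mu0) => //.
  replace (2 * eps / mu0 * mu0) with (2 * eps) by (field; lra).
  lra.
have Hd : norm w <= sqrt (2 * eps / mu0).
  rewrite /norm; exact: sqrt_le_1_alt.
have Hdpos : 0 <= norm w by exact: sqrt_pos.
have Hpsipos : forall q, 0 <= psi c soft eps_psi q.
  move=> q; case: (HA4 q) => z [_ [_ hz]].
  have : 0 <= beta * norm (vsub z q) ^ 2.
    apply: Rmult_le_pos; [lra| apply: pow2_ge_0].
  lra.
have Hps : f0 pstar <= f0 pa.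
  have := Hpstar pa; rewrite /fpen Hpa.
  have := Hpsipos pstar; clearbody w D; nra.
have HG : norm (f0' pstar) <= D0 by apply: Hub; exists pstar; split.
have HD0pos : 0 <= D0.
  apply: Rle_trans (Hub _ (ex_intro _ pa (conj (Rle_refl _) erefl))).
  exact: sqrt_pos.
have Hcs := cs (f0' pstar) w.
have HGpos : 0 <= norm (f0' pstar) by exact: sqrt_pos.
have Hprod : norm (f0' pstar) * norm w <= D0 * sqrt (2 * eps / mu0).
  apply: Rmult_le_compat => //.
have up := Hsm pstar p.
have lo := Hsc pstar p.
rewrite -/w norm_sq -/D in up lo.
have HL : L0 / 2 * D <= L0 / 2 * (2 * eps / mu0).
  apply: Rmult_le_compat_l => //; lra.
have a1 : inner (f0' pstar) w <= norm (f0' pstar) * norm w.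
  apply: Rle_trans (Rle_abs _) Hcs.
have a2 : - (norm (f0' pstar) * norm w) <= inner (f0' pstar) w.
  have := Rle_abs (- inner (f0' pstar) w). rewrite Rabs_Ropp. lra.
apply: Rabs_le; split.
- have : 0 <= mu0 / 2 * D by apply: Rmult_le_pos; lra.
  have : 0 <= L0 / 2 * (2 * eps / mu0).
    apply: Rmult_le_pos; first lra.
    rewrite /Rdiv; apply: Rmult_le_pos; [lra| apply: Rlt_le; apply: Rinv_0_lt_compat; lra].
  lra.
- lra.
Qed.
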